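(* Let $f:\mathbb{R}^n\to\mathbb{R}\cup\{+\infty\}$ be a polyhedral M-convex function with bounded $\operatorname{dom}_{\mathbb{R}} f$, and $x\in\operatorname{dom}_{\mathbb{R}} f$ with $\phi_{\mathbb{R}}(x)<0$. Consider the procedure PM-IncSlope$(x)$: set $y:=x$; for each $i\in N$ (each exactly once, arbitrary order) and, for this $i$, for each $j\in N\setminus\{i\}$ (each exactly once, arbitrary order), if $f'_{\mathbb{R}}(y;i,j)=\phi_{\mathbb{R}}(x)$ then replace $y$ by $y+\bar c_{\mathbb{R}}(y;i,j)(\chi_i-\chi_j)$; finally output $x':=y$. Then $\phi_{\mathbb{R}}(x')>\phi_{\mathbb{R}}(x)$.
   Context: $N=\{1,\dots,n\}$; $\chi_i$ is the $i$-th unit vector. $\operatorname{dom}_{\mathbb{R}} f=\{x\in\mathbb{R}^n:f(x)<+\infty\}$. A polyhedral convex function $f:\mathbb{R}^n\to\mathbb{R}\cup\{+\infty\}$ (epigraph a polyhedron, $\operatorname{dom}_{\mathbb{R}} f\neq\emptyset$) is M-convex if for all $x,y\in\operatorname{dom}_{\mathbb{R}} f$ and every $i$ with $x(i)>y(i)$ there exist $j$ with $x(j)<y(j)$ and $\epsilon_0>0$ such that $f(x)+f(y)\ge f(x-\epsilon(\chi_i-\chi_j))+f(y+\epsilon(\chi_i-\chi_j))$ for all $\epsilon\in[0,\epsilon_0]$. For $x\in\operatorname{dom}_{\mathbb{R}} f$, $f'_{\mathbb{R}}(x;i,j)=\lim_{\alpha\downarrow0}(f(x+\alpha(\chi_i-\chi_j))-f(x))/\alpha$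 (possibly $+\infty$), $\phi_{\mathbb{R}}(x)=\min_{i,j\in N}f'_{\mathbb{R}}(x;i,j)$, and for finite $f'_{\mathbb{R}}(x;i,j)$, $\bar c_{\mathbb{R}}(x;i,j)=\max\{\lambda\ge0: f(x+\lambda(\chi_i-\chi_j))-f(x)=\lambda f'_{\mathbb{R}}(x;i,j)\}$. *)

(* Defs.v *)
From HB Require Import structures.
From mathcomp Require Import all_boot all_order all_algebra all_fingroup.
From mathcomp Require Import all_classical all_reals all_analysis.
Set Implicit Arguments. Unset Strict Implicit. Unset Printing Implicit Defensive.
Import Order.TTheory GRing.Theory Num.Theory.
Local Open Scope ring_scope.
Local Open Scope classical_set_scope.
Local Open Scope ereal_scope.

Section Defs.
Variables (R : realType) (n : nat).
Notation vec := 'rV[R]_n.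

Definition chi (i : 'I_n) : vec := delta_mx ord0 i.
Definition dir (i j : 'I_n) : vec := (chi i - chi j)%R.

Definition domR (f : vec -> \bar R) : set vec := [set x | f x < +oo].

Definition polyhedral_convex (f : vec -> \bar R) : Prop :=
  (forall x, f x != -oo) /\ (exists x, f x < +oo) /\
  exists (m : nat) (A : 'I_m -> vec) (b c : 'I_m -> R),
    forall (x : vec) (t : R),
      (f x <= t%:E) <-> (forall k, \sum_(i < n) (A k) ord0 i * x ord0 i + b k * t <= c k)%R.

Definition M_convex (f : vec -> \bar R) : Prop :=
  polyhedral_convex f /\
  forall x y, domR f x -> domR f y ->
  forall i, (y ord0 i < x ord0 i)%R ->
  exists j, (x ord0 j < y ord0 j)%R /\
  exists eps0 : R, (0 < eps0)%R /\
    forall eps : R, (0 <= eps <= eps0)%R ->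
      f (x - eps *: dir i j)%R + f (y + eps *: dir i j)%R <= f x + f y.

Definition diffq (f : vec -> \bar R) (x : vec) (i j : 'I_n) (a : R) : \bar R :=
  (f (x + a *: dir i j)%R - f x) * (a^-1)%:E.

Definition fder (f : vec -> \bar R) (x : vec) (i j : 'I_n) : \bar R :=
  lim (diffq f x i j @ (0:R)^'+).

Definition phiR (f : vec -> \bar R) (x : vec) : \bar R :=
  \big[mine/+oo]_(i < n) \big[mine/+oo]_(j < n) fder f x i j.

(* c_R(x; i, j) = max { lambda >= 0 | f(x + lambda (chi_i - chi_j)) - f(x)
                                       = lambda * f'_R(x; i, j) }
   (used only when f'_R(x;i,j) is finite; the max exists for bounded dom f,
    and is expressed here as the supremum of this set) *)
Definition cbar (f : vec -> \bar R) (x : vec) (i j : 'I_n) : R :=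
  sup [set lam : R | (0 <= lam)%R /\
        f (x + lam *: dir i j)%R - f x = (lam * fine (fder f x i j))%:E].

Definition inc_step (f : vec -> \bar R) (phi0 : \bar R) (y : vec) (i j : 'I_n)
  : vec :=
  if (j != i) && (fder f y i j == phi0) then (y + cbar f y i j *: dir i j)%R else y.

(* PM-IncSlope(x): outer loop over i in the order sigma, and for each i an inner
   loop over j in the order tau i (j = i is skipped, i.e. j ranges over N \ {i}). *)
Definition PM_IncSlope (f : vec -> \bar R) (sigma : {perm 'I_n})
  (tau : 'I_n -> {perm 'I_n}) (x : vec) : vec :=
  foldl (fun y k =>
           let i := sigma k in
           foldl (fun z l => inc_step f (phiR f x) z i (tau i l)) y (enum 'I_n))
        x (enum 'I_n).

End Defs.

(* Main.v *)
Require Import Defs.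
From HB Require Import structures.
From mathcomp Require Import all_boot all_order all_algebra all_fingroup.
From mathcomp Require Import all_classical all_reals all_analysis.
From mathcomp Require Import lra ring.
Set Implicit Arguments. Unset Strict Implicit. Unset Printing Implicit Defensive.
Import Order.TTheory GRing.Theory Num.Theory numFieldNormedType.Exports.
Local Open Scope ring_scope.
Local Open Scope classical_set_scope.
Local Open Scope ereal_scope.

Section Aux.
Variable R : realType.

Lemma pos_below m (P : pred 'I_m) (a : 'I_m -> R) :
  (forall k, P k -> (0 < a k)%R) -> exists2 e : R, (0 < e)%R & forall k, P k -> (e <= a k)%R.
Proof.
move=> Ha; exists (\big[Order.min/1%R]_(k | P k) a k).
  apply: (big_ind (fun x => 0 < x)%R) => //=.
  by move=> x y x0 y0; rewrite lt_min x0.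
by move=> k Pk; apply: bigmin_le_cond.
Qed.
End Aux.

Section Poly.
Variables (R : realType) (n : nat) (f : 'rV[R]_n -> \bar R).
Variables (m : nat) (A : 'I_m -> 'rV[R]_n) (b c : 'I_m -> R).
Hypothesis fnoo : forall x, f x != -oo.
Hypothesis frep : forall x (t : R), f x <= t%:E <->
   (forall k, \sum_(i < n) (A k) ord0 i * x ord0 i + b k * t <= c k)%R.

Definition lin k (x : 'rV[R]_n) : R := \sum_(i < n) (A k) ord0 i * x ord0 i.

Lemma linD k x y : lin k (x + y) = (lin k x + lin k y)%R.
Proof. by rewrite /lin -big_split /=; apply: eq_bigr => i _; rewrite mxE mulrDr. Qed.
Lemma linZ k (a : R) x : lin k (a *: x) = (a * lin k x)%R.
Proof. by rewrite /lin mulr_sumr; apply: eq_bigr => i _; rewrite mxE mulrCA. Qed.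

Lemma frep' x t : f x <= t%:E <-> (forall k, lin k x + b k * t <= c k)%R.
Proof. exact: frep. Qed.

Lemma fin_of x : f x != +oo -> f x = (fine (f x))%:E.
Proof. by move=> h; rewrite fineK // fin_numE fnoo h. Qed.


Lemma lsc_line y g0 e p (C : set R) : C 0%R -> has_ubound C ->
  (forall l, C l -> f (y + l *: e) <= (g0 + l * p)%:E) ->
  f (y + sup C *: e) <= (g0 + sup C * p)%:E.
Proof.
move=> C0 Cub hC; apply/frep' => k.
have hl l : C l -> (lin k y + b k * g0 + (lin k e + b k * p) * l <= c k)%R.
  by move=> /hC /frep' /(_ k); rewrite linD linZ; lra.
have Csup : has_sup C by split=> //; exists 0%R.
have s0 : (0 <= sup C)%R by apply: (ub_le_sup Cub).
rewrite linD linZ.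
have [bl|bl] := leP (lin k e + b k * p)%R 0%R.
  have := hl _ C0; have := mulr_le0_ge0 bl s0; lra.
rewrite leNgt; apply/negP => hlt.
pose eps := ((lin k y + lin k e * sup C + b k * (g0 + sup C * p) - c k) / (lin k e + b k * p))%R.
have eps0 : (0 < eps)%R by apply: divr_gt0 => //; lra.
have [l Cl hl2] := sup_adherent eps0 Csup.
have := hl _ Cl.
have : ((lin k e + b k * p) * (sup C - eps) < (lin k e + b k * p) * l)%R by rewrite ltr_pM2l.
rewrite mulrBr /eps mulrCA mulfV ?gt_eqF // mulr1; lra.
Qed.

Lemma lim_ev (g : R -> \bar R) (L : \bar R) e : (0 < e)%R ->
  (forall eta, (0 < eta <= e)%R -> g eta = L) -> lim (g @ (0:R)^'+) = L.
Proof.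
move=> e0 hg; apply: cvg_lim => //.
have h : {near (0:R)^'+, (fun=> L) =1 g}.
  near=> eta; apply/esym/hg; apply/andP; split.
    by near: eta; apply: nbhs_right_gt.
  by near: eta; apply: nbhs_right_ltW.
apply: cvg_trans (near_eq_cvg h) _; exact: cvg_cst.
Unshelve. all: by end_near.
Qed.

Section Ray.
Variables (y : 'rV[R]_n) (g0 : R) (u : 'rV[R]_n).
Hypothesis fy : f y = g0%:E.
Let r k := (c k - lin k y - b k * g0)%R.
Let au k := lin k u.

Lemma r_ge0 k : (0 <= r k)%R.
Proof. have /(frep' y g0) h : f y <= g0%:E by rewrite fy. by have := h k; rewrite /r; lra. Qed.

Lemma cons_iff eta t : f (y + eta *: u) <= t%:E <->
   (forall k, 0 <= r k - eta * au k - b k * (t - g0))%R.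
Proof.
rewrite frep'; split=> h k; move: (h k); rewrite linD linZ /r /au; lra.
Qed.

Lemma b_le0 k : (b k <= 0)%R.
Proof.
rewrite leNgt; apply/negP => bk.
have /(cons_iff 0) /(_ k) : f (y + 0 *: u) <= (g0 + r k / b k + 1)%:E.
  rewrite scale0r addr0 fy lee_fin.
  have : (0 <= r k / b k)%R by apply: divr_ge0; [exact: r_ge0|exact: ltW].
  lra.
rewrite mul0r subr0 (_ : (g0 + r k / b k + 1 - g0) = r k / b k + 1)%R; last by lra.
rewrite mulrDr mulrC divfK ?gt_eqF //; lra.
Qed.

Lemma fin_le x t : f x <= t%:E -> f x = (fine (f x))%:E.
Proof. by move=> h; apply: fin_of; apply: contraTneq h => ->; rewrite leNgt ltry. Qed.

Lemma ray : exists2 e : R, (0 < e)%R &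
  ((forall eta, (0 < eta <= e)%R -> f (y + eta *: u) = +oo) \/
   exists d : R, forall eta, (0 <= eta <= e)%R -> f (y + eta *: u) = (g0 + d * eta)%:E).
Proof.
case: (pselect (exists k, [&& r k == 0%R, b k == 0%R & (0 < au k)%R])).
  move=> [k /and3P[/eqP rk /eqP bk auk]]; exists 1%R => //; left => eta /andP[eta0 _].
  have [//|/fin_of ft] := eqVneq (f (y + eta *: u)) +oo.
  have : f (y + eta *: u) <= (fine (f (y + eta *: u)))%:E by rewrite {1}ft.
  move=> /cons_iff /(_ k); rewrite rk bk mul0r subr0 sub0r oppr_ge0 => h.
  by have := mulr_gt0 eta0 auk; rewrite ltNge h.
move=> nex.
have Hneg k : r k = 0%R -> b k = 0%R -> (au k <= 0)%R.
  move=> rk bk; rewrite leNgt; apply/negP => h; apply: nex; exists k.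
  by rewrite rk bk eqxx h.
have [k0 /andP[/eqP rk0 bk0]] : exists k, (r k == 0%R) && (b k < 0)%R.
  apply: contrapT => nex2.
  have rpos k : (b k < 0)%R -> (0 < r k / - b k)%R.
    move=> bk; apply: divr_gt0; last by rewrite oppr_gt0.
    rewrite lt_neqAle r_ge0 andbT eq_sym; apply/negP => /eqP rk.
    by apply: nex2; exists k; rewrite rk eqxx bk.
  have [th th0 thle] := @pos_below R _ (fun k => b k < 0)%R _ rpos.
  have : f (y + 0 *: u) <= (g0 - th)%:E.
    apply/cons_iff => k; rewrite mul0r subr0 (_ : g0 - th - g0 = - th)%R; last by lra.
    have [bk|] := ltP (b k) 0%R.
      have := thle k bk; rewrite ler_pdivlMr ?oppr_gt0 //; lra.
    have := b_le0 k => h1 h2; have -> : b k = 0%R by apply/eqP; rewrite eq_le h1 h2.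
    by rewrite mul0r subr0; apply: r_ge0.
  by rewrite scale0r addr0 fy lee_fin; lra.
pose sg k := (au k / - b k)%R.
pose S := [set s : R | forall k, r k = 0%R -> (au k + b k * s <= 0)%R]%classic.
have Ssg s k : S s -> r k = 0%R -> (b k < 0)%R -> (sg k <= s)%R.
  move=> Ss rk bk; have := Ss k rk; rewrite /sg ler_pdivrMr ?oppr_gt0 //; lra.
have S0 : S (\sum_(l < m) `|sg l|)%R.
  move=> k rk; have [bk|] := ltP (b k) 0%R.
    have : (sg k <= \sum_(l < m) `|sg l|)%R.
      apply: le_trans (ler_norm _) _; rewrite (bigD1 k) //= lerDl.
      by apply: sumr_ge0 => i _; exact: normr_ge0.
    rewrite /sg ler_pdivrMr ?oppr_gt0 //; lra.
  have := b_le0 k => h1 h2; have bk : b k = 0%R by apply/eqP; rewrite eq_le h1 h2.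
  by rewrite bk mul0r addr0; apply: Hneg.
have Slb : has_lbound S by exists (sg k0) => s Ss; apply: Ssg.
have Sne : (S !=set0)%classic by exists (\sum_(l < m) `|sg l|)%R.
pose d := inf S.
have Sd : S d.
  move=> k rk; have [bk|] := ltP (b k) 0%R.
    have : (sg k <= d)%R by apply: lb_le_inf => // s Ss; apply: Ssg.
    rewrite /sg ler_pdivrMr ?oppr_gt0 //; lra.
  have := b_le0 k => h1 h2; have bk : b k = 0%R by apply/eqP; rewrite eq_le h1 h2.
  by rewrite bk mul0r addr0; apply: Hneg.
pose w k := (au k + b k * d)%R.
have wpos k : ((0 < r k) && (0 < w k))%R -> (0 < r k / w k)%R.
  by case/andP => h1 h2; apply: divr_gt0.
have [e e0 ele] := @pos_below R _ (fun k => (0 < r k) && (0 < w k))%R _ wpos.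
have up eta : (0 <= eta <= e)%R -> f (y + eta *: u) <= (g0 + d * eta)%:E.
  move=> /andP[eta0 etae]; apply/cons_iff => k.
  rewrite (_ : g0 + d * eta - g0 = d * eta)%R; last by lra.
  rewrite (_ : r k - eta * au k - b k * (d * eta) = r k - eta * w k)%R; last by rewrite /w; ring.
  have [rk|rk] := eqVneq (r k) 0%R.
    by rewrite rk sub0r oppr_ge0; apply: mulr_ge0_le0 => //; apply: Sd.
  have rkp : (0 < r k)%R by rewrite lt_neqAle eq_sym rk r_ge0.
  have [wk|wk] := leP (w k) 0%R.
    by have := mulr_ge0_le0 eta0 wk; lra.
  have := ele k; rewrite rkp wk => /(_ isT); rewrite ler_pdivlMr // => h.
  have := ler_wpM2r (ltW wk) etae; lra.
exists e => //; right; exists d => eta /andP[eta0 etae].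
have [->|etan0] := eqVneq eta 0%R; first by rewrite scale0r addr0 mulr0 addr0.
have etap : (0 < eta)%R by rewrite lt_neqAle eq_sym etan0.
have hu : f (y + eta *: u) <= (g0 + d * eta)%:E by apply: up; rewrite eta0 etae.
have hf := fin_le hu; rewrite hf in hu *; congr (_%:E); apply/eqP; rewrite eq_le -lee_fin hu /=.
rewrite leNgt; apply/negP => lt.
set t := fine _ in hu lt.
have ht : f (y + eta *: u) <= t%:E by rewrite hf.
pose s := ((t - g0) / eta)%R.
have Ss : S s.
  move=> k rk; move/cons_iff: ht => /(_ k); rewrite rk.
  rewrite (_ : t - g0 = s * eta)%R; last by rewrite /s divfK.
  move=> h; have : (0 <= - eta * (au k + b k * s))%R by move: h; rewrite mulrDr; lra.
  by rewrite mulNr oppr_ge0 pmulr_rle0.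
have := ge_inf Slb Ss; rewrite -/d /s ler_pdivlMr //; lra.
Qed.
End Ray.

Lemma fder_ray y g0 i j : f y = g0%:E -> exists2 e : R, (0 < e)%R &
  (((forall eta, (0 < eta <= e)%R -> f (y + eta *: dir R i j) = +oo) /\ fder f y i j = +oo) \/
  (exists d : R, (forall eta, (0 <= eta <= e)%R -> f (y + eta *: dir R i j) = (g0 + d * eta)%:E)
     /\ fder f y i j = d%:E)).
Proof.
move=> fy; have [e e0 [hA|[d hB]]] := ray (dir R i j) fy; exists e => //.
  left; split => //; apply: (lim_ev e0) => eta /andP[eta0 etae].
  rewrite /diffq hA ?eta0 ?etae // fy -EFinN addye // gt0_mulye // lte_fin invr_gt0 //.
right; exists d; split => //; apply: (lim_ev e0) => eta /andP[eta0 etae].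
rewrite /diffq hB ?(ltW eta0) ?etae // fy -EFinB -EFinM; congr (_%:E).
by field; rewrite gt_eqF.
Qed.
End Poly.

Section Der.
Variables (R : realType) (n : nat) (f : 'rV[R]_n -> \bar R).
Variables (m : nat) (A : 'I_m -> 'rV[R]_n) (b c : 'I_m -> R).
Hypothesis fnoo : forall x, f x != -oo.
Hypothesis frep : forall x (t : R), f x <= t%:E <->
   (forall k, \sum_(i < n) (A k) ord0 i * x ord0 i + b k * t <= c k)%R.

Lemma dom_fin y : domR f y -> f y = (fine (f y))%:E.
Proof. by move=> h; apply: (fin_of fnoo); rewrite lt_eqF. Qed.

Lemma D1 y i j (p : R) : domR f y -> p%:E <= fder f y i j ->
  exists2 e : R, (0 < e)%R & forall eta, (0 <= eta <= e)%R ->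
     f y + (p * eta)%:E <= f (y + eta *: dir R i j).
Proof.
move=> /dom_fin fy hp; have [e e0 [[hA hf]|[d [hB hf]]]] := fder_ray fnoo frep i j fy.
  exists e => // eta /andP[eta0 etae].
  have [->|etan0] := eqVneq eta 0%R; first by rewrite mulr0 addr0 scale0r addr0.
  by rewrite hA ?leey // etae lt_neqAle eq_sym etan0 eta0.
exists e => // eta etab; rewrite hB // fy -EFinD lee_fin lerD2l.
by rewrite hf lee_fin in hp; apply: ler_wpM2r => //; case/andP: etab.
Qed.

Lemma D2 y i j (p : R) : domR f y -> fder f y i j = p%:E ->
  exists2 e : R, (0 < e)%R & forall eta, (0 <= eta <= e)%R ->
     f (y + eta *: dir R i j) = f y + (p * eta)%:E.
Proof.
move=> /dom_fin fy hp; have [e e0 [[hA hf]|[d [hB hf]]]] := fder_ray fnoo frep i j fy.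
  by rewrite hf in hp.
exists e => // eta etab; rewrite hB // fy -EFinD.
by rewrite hf in hp; case: hp => ->.
Qed.

Lemma D3 y i j (p : R) : domR f y -> fder f y i j < p%:E ->
  exists2 e : R, (0 < e)%R & f (y + e *: dir R i j) < f y + (p * e)%:E.
Proof.
move=> /dom_fin fy hp; have [e e0 [[hA hf]|[d [hB hf]]]] := fder_ray fnoo frep i j fy.
  by rewrite hf ltNge leey in hp.
exists e => //; rewrite hB ?lexx ?(ltW e0) // fy -EFinD lte_fin ltrD2l.
by rewrite hf lte_fin in hp; rewrite ltr_pM2r.
Qed.

Lemma D4 y i j (p : R) e : domR f y -> (0 < e)%R ->
  (forall eta, (0 < eta <= e)%R -> f (y + eta *: dir R i j) = f y + (p * eta)%:E) ->
  fder f y i j = p%:E.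
Proof.
move=> /dom_fin fy e0 h; apply: (lim_ev e0) => eta /andP[eta0 etae].
rewrite /diffq h ?eta0 ?etae // fy -EFinD -EFinM; congr (_%:E).
by field; rewrite gt_eqF.
Qed.

Lemma D5 y i : domR f y -> fder f y i i = 0.
Proof.
move=> hy; apply: (D4 hy ltr01) => eta _.
by rewrite /dir subrr scaler0 addr0 mul0r adde0.
Qed.

Lemma fder_noo y i j : domR f y -> fder f y i j != -oo.
Proof.
move=> /dom_fin fy; have [e _ [[_ ->]|[d [_ ->]]]] := fder_ray fnoo frep i j fy => //.
Qed.
End Der.

Section Norm.
Variables (R : realType) (n : nat).

Definition Nv (w : 'rV[R]_n) : R := (\sum_i `|w ord0 i|)%R.

Lemma dirE (s t r : 'I_n) : (dir R s t) ord0 r = ((r == s)%:R - (r == t)%:R)%R.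
Proof. by rewrite /dir /chi !mxE /=. Qed.

Lemma NvB (w y : 'rV[R]_n) : Nv (w - y) = (\sum_i `|w ord0 i - y ord0 i|)%R.
Proof. by apply: eq_bigr => i _; rewrite !mxE. Qed.

Lemma Nv0 : Nv 0 = 0%R.
Proof. by rewrite /Nv big1 // => i _; rewrite mxE normr0. Qed.

Lemma Nv_ge0 w : (0 <= Nv w)%R.
Proof. by apply: sumr_ge0 => i _; exact: normr_ge0. Qed.

Lemma NvD w1 w2 : (Nv (w1 + w2) <= Nv w1 + Nv w2)%R.
Proof. by rewrite /Nv -big_split /=; apply: ler_sum => i _; rewrite mxE ler_normD. Qed.

Lemma NvZ a w : Nv (a *: w) = (`|a| * Nv w)%R.
Proof. by rewrite /Nv mulr_sumr; apply: eq_bigr => i _; rewrite mxE normrM. Qed.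

Lemma NvN w : Nv (- w) = Nv w.
Proof. by rewrite /Nv; apply: eq_bigr => i _; rewrite mxE normrN. Qed.

Lemma Nv_chi s : Nv (chi R s) = 1%R.
Proof.
rewrite /Nv (bigD1 s) //= big1 => [|r rs]; rewrite /chi mxE /= ?eqxx ?normr1 ?addr0 //.
by rewrite (negbTE rs) normr0.
Qed.

Lemma Nv_dir s t : (Nv (dir R s t) <= 2)%R.
Proof. by apply: le_trans (NvD _ _) _; rewrite NvN !Nv_chi. Qed.

Lemma Nv_dirZ a s t : (Nv (a *: dir R s t) <= 2 * `|a|)%R.
Proof. by rewrite NvZ mulrC ler_wpM2r // Nv_dir. Qed.

Lemma Nv_eq0 w : Nv w = 0%R -> w = 0%R.
Proof.
move=> h; apply/rowP => i; rewrite mxE; apply/eqP; rewrite -normr_eq0; apply/eqP.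
apply/le_anti; rewrite normr_ge0 andbT -h /Nv (bigD1 i) //= lerDl.
by apply: sumr_ge0 => r _; exact: normr_ge0.
Qed.

Lemma Nv_step (w : 'rV[R]_n) (s t : 'I_n) (eta : R) : s != t -> (0 <= eta)%R -> (eta <= w ord0 s)%R ->
  (w ord0 t <= - eta)%R -> Nv (w - eta *: dir R s t) = (Nv w - 2 * eta)%R.
Proof.
move=> st eta0 hs ht.
rewrite /Nv (bigD1 s) //= (bigD1 t) 1?eq_sym //= [in RHS](bigD1 s) //= [in RHS](bigD1 t) 1?eq_sym //=.
rewrite [X in (_ + (_ + X))%R = _](_ : _ = \sum_(i < n | (i != s) && (i != t)) `|w ord0 i|)%R.
  rewrite !mxE /= eqxx (negbTE st) eq_sym (negbTE st) eqxx /=.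
  rewrite (ger0_norm (_ : 0 <= w ord0 s)%R); last by lra.
  rewrite (ler0_norm (_ : w ord0 t <= 0)%R); last by lra.
  rewrite (ger0_norm (_ : 0 <= w ord0 s - eta * (1 - 0))%R); last by lra.
  rewrite (ler0_norm (_ : w ord0 t - eta * (0 - 1) <= 0)%R); last by lra.
  lra.
apply: eq_bigr => r /andP[rs rt]; rewrite !mxE /= (negbTE rs) (negbTE rt).
by rewrite subrr mulr0 subr0.
Qed.
End Norm.

Section Vec.
Variables (R : realType) (n : nat).
Implicit Types (y a bb : 'rV[R]_n) (i j k l : 'I_n).

Lemma sub_fin_eq (a : \bar R) (x r : R) : a - x%:E = r%:E <-> a = (x + r)%:E.
Proof.
case: a => [a'| |] /=; split => //.
- by case=> h; congr (_%:E); rewrite -h; ring.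
- by case=> ->; congr (_%:E); ring.
Qed.

Lemma zyE y a bb : (y + a + bb - y = a + bb)%R.
Proof. by apply/rowP => r; rewrite !mxE; ring. Qed.

Lemma zyE1 y a : (y + a - y = a)%R.
Proof. by apply/rowP => r; rewrite !mxE; ring. Qed.

Lemma subE (a bb : 'rV[R]_n) r : ((a - bb) ord0 r = a ord0 r - bb ord0 r)%R.
Proof. by rewrite !mxE. Qed.

Lemma dirN i j : dir R j i = (- dir R i j)%R.
Proof. by rewrite /dir opprB. Qed.

Lemma dir_chain1 (c e : R) i j l :
  (c *: dir R i j + e *: dir R j l = (c - e) *: dir R i j + e *: dir R i l)%R.
Proof. by apply/rowP => r; rewrite !mxE; ring. Qed.

Lemma dir_chain2 (c e : R) i j k :
  (c *: dir R i j + e *: dir R k i = (c - e) *: dir R i j + e *: dir R k j)%R.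
Proof. by apply/rowP => r; rewrite !mxE; ring. Qed.

Lemma Nv2 (c e : R) i j k l : (Nv (c *: dir R i j + e *: dir R k l) <= 2 * `|c| + 2 * `|e|)%R.
Proof. by apply: le_trans (NvD _ _) _; apply: lerD; apply: Nv_dirZ. Qed.
End Vec.

Lemma ereal_aux (R : realType) (a1 a2 : \bar R) (C D P : R) : a1 != -oo -> a2 != -oo ->
  a1 + a2 <= (C + D)%:E -> (D + P)%:E <= a2 -> a1 <= (C - P)%:E.
Proof.
case: a1 => [x1| |] // _; case: a2 => [x2| |] // _.
- by rewrite -EFinD !lee_fin; lra.
all: try by rewrite ?addey ?addye // leNgt ltey.
Qed.

Section Main.
Variables (R : realType) (n : nat) (f : 'rV[R]_n -> \bar R).
Variables (m : nat) (A : 'I_m -> 'rV[R]_n) (b c : 'I_m -> R).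
Hypothesis fnoo : forall x, f x != -oo.
Hypothesis frep : forall x (t : R), f x <= t%:E <->
   (forall k, \sum_(i < n) (A k) ord0 i * x ord0 i + b k * t <= c k)%R.
Hypothesis exch : forall x y, domR f x -> domR f y ->
  forall i, (y ord0 i < x ord0 i)%R ->
  exists j, (x ord0 j < y ord0 j)%R /\
  exists eps0 : R, (0 < eps0)%R /\
    forall eps : R, (0 <= eps <= eps0)%R ->
      f (x - eps *: dir R i j)%R + f (y + eps *: dir R i j)%R <= f x + f y.
Variable M : R.
Hypothesis bnd : forall y, domR f y -> forall i, (`|y ord0 i| <= M)%R.

Lemma cont_g (a b' d : R) : continuous (fun x : R => a * x + b' * `|x - d|)%R.
Proof.
move=> x; apply: continuousD; first exact: mulrl_continuous.
apply: continuousM; first exact: cvg_cst.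
apply: continuous_comp; last exact: norm_continuous.
by apply: continuousB; [exact: cvg_id|exact: cvg_cst].
Qed.

Lemma cont_sum (g : 'I_n -> R -> R) : (forall i, continuous (g i)) ->
  continuous (fun w : 'rV[R]_n => \sum_i g i (w ord0 i))%R.
Proof.
move=> hg; apply: continuous_big; first exact: add_continuous.
move=> i _ w; apply: continuous_comp; first exact: coord_continuous.
exact: hg.
Qed.

Lemma L1 y (p : R) : domR f y ->
  (forall s t, s != t -> exists2 e : R, (0 < e)%R & forall eta, (0 <= eta <= e)%R ->
      f y + (p * eta)%:E <= f (y + eta *: dir R s t)) ->
  forall z, f y + ((p / 2) * Nv (z - y))%:E <= f z.
Proof.
move=> hy hsl z; rewrite leNgt; apply/negP => hz.
have fy := dom_fin fnoo hy; set g0 := fine (f y) in fy.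
have hzd : domR f z by apply: lt_trans hz _; rewrite fy -EFinD ltry.
have fz := dom_fin fnoo hzd; set gz := fine (f z) in fz.
set hp := (p / 2)%R.
pose q := (gz - hp * Nv (z - y))%R.
have qlt : (q < g0)%R.
  by move: hz; rewrite {1}fz {1}fy -EFinD lte_fin /q /hp; lra.
pose S := [set w | f w <= (q + hp * Nv (w - y))%:E].
pose G k i x := (A k ord0 i * x + b k * hp * `|x - y ord0 i|)%R.
have SE : S = \bigcap_(k in setT) [set w | (\sum_i G k i (w ord0 i) <= c k - b k * q)%R].
  apply/seteqP; split => w.
    move=> /frep Sw k _ /=; have := Sw k.
    rewrite /G big_split /= -mulr_sumr NvB; lra.
  move=> Sw; apply/frep => k; have := Sw k I; rewrite /= /G big_split /= -mulr_sumr NvB.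
  lra.
have Scl : closed S.
  rewrite SE; apply: closed_bigI => k _.
  apply: (@preimage_closed _ _ (fun w : 'rV[R]_n => \sum_i G k i (w ord0 i))%R
     [set x | (x <= c k - b k * q)%R]); last exact: closed_le.
  by move=> w _; apply: (cont_sum (g := G k)) => i; exact: cont_g.
have Sbox : S `<=` [set v : 'rV[R]_n | forall i, `[(- M)%R, M] (v ord0 i)].
  move=> w Sw i /=; have : domR f w by apply: le_lt_trans Sw _; exact: ltry.
  by move=> /bnd /(_ i); rewrite in_itv /= -ler_norml.
have Scp : compact S.
  apply: subclosed_compact Scl _ Sbox.
  by apply: (@rV_compact _ _ (fun=> `[(- M)%R, M]%classic)) => i; exact: segment_compact.
have Sz : S z by rewrite /S /= /q {1}fz lee_fin; lra.
have cN : continuous (fun w : 'rV[R]_n => Nv (w - y)).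
  have -> : (fun w => Nv (w - y)) =
      (fun w => \sum_i (0 * w ord0 i + 1 * `|w ord0 i - y ord0 i|))%R.
    by apply/funext => w; rewrite NvB; apply: eq_bigr => i _; rewrite mul0r add0r mul1r.
  by apply: (cont_sum (g := fun i x => 0 * x + 1 * `|x - y ord0 i|)%R) => i; exact: cont_g.
have cS : {within S, continuous (fun w => Nv (w - y))} by apply: continuous_subspaceT.
have [w Sw wmin] := EVT_min_rV (ex_intro _ z Sz) Scp cS.
rewrite inE in Sw.
have hw : domR f w by apply: le_lt_trans Sw (ltry _).
have wy : w != y.
  apply/eqP => wy; move: Sw; rewrite wy subrr Nv0 fy lee_fin; lra.
have [s hs] : exists s, (y ord0 s < w ord0 s)%R.
  apply: contrapT => ns.
  have [s0 hs0] : exists s, w ord0 s != y ord0 s.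
    apply: contrapT => ne; move/eqP: wy; apply; apply/rowP => i.
    have ord0E : (0%R : 'I_1) = ord0 by apply/val_inj.
    rewrite ord0E; apply/eqP; apply: contrapT => h; apply: ne; exists i; exact/negP.
  have hs1 : (w ord0 s0 < y ord0 s0)%R.
    rewrite lt_neqAle hs0 /=; rewrite leNgt; apply/negP => h; apply: ns; by exists s0.
  have [j [hj _]] := exch hy hw hs1.
  by apply: ns; exists j.
have [t [ht [e0 [e0p hex]]]] := exch hw hy hs.
have st : s != t by apply/eqP => st; move: hs ht; rewrite st; lra.
have [e1 e1p hsl1] := hsl s t st.
pose eta := Num.min (Num.min e0 e1) (Num.min (w ord0 s - y ord0 s) (y ord0 t - w ord0 t))%R.
have etap : (0 < eta)%R by rewrite !lt_min e0p e1p !subr_gt0 hs ht.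
have [le0 le1 les lt_] : [/\ (eta <= e0)%R, (eta <= e1)%R, (eta <= w ord0 s - y ord0 s)%R &
    (eta <= y ord0 t - w ord0 t)%R] by rewrite /eta !ge_min !lexx ?orbT.
have h1 := hex eta; rewrite (ltW etap) le0 in h1; have {}h1 := h1 isT.
have h2 := hsl1 eta; rewrite (ltW etap) le1 in h2; have {}h2 := h2 isT.
have h3 : f w + f y <= ((q + hp * Nv (w - y)) + g0)%:E by rewrite EFinD fy; apply: leeD.
rewrite fy -EFinD in h2.
have h4 := ereal_aux (fnoo _) (fnoo _) (le_trans h1 h3) h2.
have hN : Nv (w - eta *: dir R s t - y) = (Nv (w - y) - 2 * eta)%R.
  rewrite addrAC; apply: Nv_step => //; first exact: ltW.
    by rewrite !mxE.
  by rewrite !mxE; lra.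
have := wmin (w - eta *: dir R s t)%R; rewrite inE hN /=.
have -> : (q + hp * (Nv (w - y) - 2 * eta) = q + hp * Nv (w - y) - p * eta)%R by rewrite /hp; field.
by move=> /(_ h4); lra.
Qed.

Variable p : R.
Hypothesis pneg : (p < 0)%R.
Definition Ge y := forall s t, p%:E <= fder f y s t.

Lemma starL y : domR f y -> Ge y -> forall z, f y + ((p / 2) * Nv (z - y))%:E <= f z.
Proof. move=> hy hG; apply: L1 => // s t _. by have := D1 fnoo frep hy (hG s t). Qed.

Lemma XL y z s t (K : R) e0 : domR f y -> Ge y -> f z = (fine (f y) + p * K)%:E ->
  (Nv (z - y) <= 2 * K)%R -> s != t -> (0 < (z - y) ord0 s)%R -> ((z - y) ord0 t < 0)%R ->
  (0 < e0)%R -> (forall eta, (0 <= eta <= e0)%R ->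
     f (y + eta *: dir R s t) + f (z - eta *: dir R s t) <= f y + f z) ->
  fder f y s t = p%:E.
Proof.
move=> hy hG fz hN st vs vt e0p hex.
have fy := dom_fin fnoo hy; set g0 := fine (f y) in fy fz.
have [e1 e1p h1] := D1 fnoo frep hy (hG s t).
pose e := Num.min (Num.min e0 e1) (Num.min ((z - y) ord0 s) (- (z - y) ord0 t))%R.
have ep : (0 < e)%R by rewrite !lt_min e0p e1p vs oppr_gt0 vt.
apply: (D4 fnoo hy ep) => eta /andP[eta0 etale].
have [le0 le1 les lt_] : [/\ (eta <= e0)%R, (eta <= e1)%R, (eta <= (z - y) ord0 s)%R &
    (eta <= - (z - y) ord0 t)%R].
  by split; apply: le_trans etale _; rewrite /e !ge_min !lexx ?orbT.
apply/le_anti/andP; split; last by apply: h1; rewrite (ltW eta0) le1.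
have hx := hex eta; rewrite (ltW eta0) le0 in hx; have {}hx := hx isT.
rewrite fy fz -EFinD in hx.
have hs := starL hy hG (z - eta *: dir R s t)%R.
have hNs : Nv (z - eta *: dir R s t - y) = (Nv (z - y) - 2 * eta)%R.
  by rewrite addrAC; apply: Nv_step => //; [exact: ltW|lra].
rewrite hNs fy -EFinD in hs.
have hs' : ((g0 + p * K) + - (p * eta))%:E <= f (z - eta *: dir R s t).
  apply: le_trans hs; rewrite lee_fin.
  have : (p * (2 * K - Nv (z - y)) <= 0)%R.
    by apply: mulr_le0_ge0; [exact: ltW|rewrite subr_ge0].
  lra.
have := ereal_aux (fnoo _) (fnoo _) hx hs'.
by rewrite opprK fy -EFinD.
Qed.

Lemma step y i j : domR f y -> Ge y -> i != j -> fder f y i j = p%:E ->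
  [/\ domR f (y + cbar f y i j *: dir R i j)%R, Ge (y + cbar f y i j *: dir R i j)%R,
      fder f (y + cbar f y i j *: dir R i j)%R i j != p%:E &
      forall k l, fder f (y + cbar f y i j *: dir R i j)%R k l = p%:E ->
         fder f y k l = p%:E \/ (k != i /\ fder f y k j = p%:E)].
Proof.
move=> hy hG ij hF.
have fy := dom_fin fnoo hy; set g0 := fine (f y) in fy.
pose C := [set lam : R | (0 <= lam)%R /\
   f (y + lam *: dir R i j)%R - f y = (lam * fine (fder f y i j))%:E].
have cE : cbar f y i j = sup C by [].
have Cmem lam : C lam <-> (0 <= lam)%R /\ f (y + lam *: dir R i j)%R = (g0 + lam * p)%:E.
  rewrite /C /= hF /= fy; split=> -[l0 h]; split=> //; exact/sub_fin_eq.
have C0 : C 0%R by apply/Cmem; rewrite scale0r addr0 fy mul0r addr0.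
have Cub : has_ubound C.
  exists (M - y ord0 i)%R => lam /Cmem [l0 hl].
  have : domR f (y + lam *: dir R i j)%R by rewrite /domR /= hl ltry.
  move=> /bnd /(_ i); rewrite !mxE /= eqxx (negbTE ij) subr0 mulr1 => h.
  have := ler_norm (y ord0 i + lam)%R; lra.
rewrite cE; set cc := sup C.
have c0 : (0 <= cc)%R by exact: (ub_le_sup Cub C0).
have fyc : f (y + cc *: dir R i j)%R = (g0 + cc * p)%:E.
  apply/le_anti/andP; split.
    apply: (lsc_line frep C0 Cub) => l /Cmem [_ ->]; exact: lexx.
  have := starL hy hG (y + cc *: dir R i j)%R; rewrite zyE1 fy -EFinD.
  apply: le_trans; rewrite lee_fin lerD2l.
  have := Nv_dirZ cc i j; rewrite ger0_norm // => h.
  have : (p * (2 * cc - Nv (cc *: dir R i j)) <= 0)%R.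
    by apply: mulr_le0_ge0; [exact: ltW|rewrite subr_ge0].
  lra.
have hy' : domR f (y + cc *: dir R i j)%R by rewrite /domR /= fyc ltry.
have hG' : Ge (y + cc *: dir R i j)%R.
  move=> k l; rewrite leNgt; apply/negP => hlt.
  have [e ep he] := D3 fnoo frep hy' hlt.
  have := starL hy hG (y + cc *: dir R i j + e *: dir R k l)%R.
  rewrite zyE fy -EFinD => h; have := le_lt_trans h he; rewrite fyc -EFinD lte_fin.
  have := Nv2 cc e i j k l; rewrite !ger0_norm ?(ltW ep) // => hN.
  have : (p * (2 * cc + 2 * e - Nv (cc *: dir R i j + e *: dir R k l)) <= 0)%R.
    by apply: mulr_le0_ge0; [exact: ltW|rewrite subr_ge0].
  lra.
split => //.
  apply/negP => /eqP hF'.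
  have [e ep he] := D2 fnoo frep hy' hF'.
  have : C (cc + e)%R.
    apply/Cmem; split; first by have := ltW ep; lra.
    rewrite scalerDl addrA he; last by rewrite (ltW ep) lexx.
    by rewrite fyc -EFinD; congr (_%:E); ring.
  move=> /(ub_le_sup Cub); rewrite -/cc; lra.
move=> k l hkl.
have [cc0|ccp] := eqVneq cc 0%R.
  by left; move: hkl; rewrite cc0 scale0r addr0.
have ccp' : (0 < cc)%R by rewrite lt_neqAle eq_sym ccp c0.
have [kl|kl] := eqVneq k l.
  move: hkl; rewrite kl (D5 fnoo _ hy') => h; exfalso.
  have /eqP := h; rewrite eqe eq_sym => /eqP p0; move: pneg; rewrite p0 ltxx //.
have [e1 e1p he1] := D2 fnoo frep hy' hkl.
pose e := Num.min e1 cc.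
have ep : (0 < e)%R by rewrite lt_min e1p ccp'.
have ee1 : (e <= e1)%R by rewrite /e ge_min lexx.
have ecc : (e <= cc)%R by rewrite /e ge_min lexx orbT.
set z := (y + cc *: dir R i j + e *: dir R k l)%R.
have fz : f z = (g0 + p * (cc + e))%:E.
  rewrite /z he1; last by rewrite (ltW ep) ee1.
  by rewrite fyc -EFinD; congr (_%:E); ring.
have hzd : domR f z by rewrite /domR /= fz ltry.
have zy : (z - y = cc *: dir R i j + e *: dir R k l)%R by rewrite /z zyE.
have hN : (Nv (z - y) <= 2 * (cc + e))%R.
  rewrite zy; apply: le_trans (Nv2 _ _ _ _ _ _) _.
  by rewrite !ger0_norm ?(ltW ep) //; lra.
have pe : (p * e < 0)%R by rewrite nmulr_rlt0.
have [canc|ncanc] := boolP ((k == j) || (l == i)).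
  exfalso.
  have hN2 : (Nv (z - y) <= 2 * cc)%R.
    rewrite zy; case/orP: canc => /eqP ->.
      rewrite dir_chain1; apply: le_trans (Nv2 _ _ _ _ _ _) _.
      by rewrite ger0_norm ?subr_ge0 // ger0_norm ?(ltW ep) //; lra.
    rewrite dir_chain2; apply: le_trans (Nv2 _ _ _ _ _ _) _.
    by rewrite ger0_norm ?subr_ge0 // ger0_norm ?(ltW ep) //; lra.
  have := starL hy hG z; rewrite fy fz -EFinD lee_fin.
  have : (p * (2 * cc - Nv (z - y)) <= 0)%R.
    by apply: mulr_le0_ge0; [exact: ltW|rewrite subr_ge0].
  lra.
rewrite negb_or in ncanc; case/andP: ncanc => kj li.
have vE r : ((z - y) ord0 r =
    cc * ((r == i)%:R - (r == j)%:R) + e * ((r == k)%:R - (r == l)%:R))%R.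
  by rewrite zy !mxE /=.
have vk : (0 < (z - y) ord0 k)%R.
  rewrite vE eqxx (negbTE kj) (negbTE kl) !subr0 mulr1.
  by have := mulr_ge0 c0 (ler0n _ (k == i)); lra.
have vl : ((z - y) ord0 l < 0)%R.
  rewrite vE (negbTE li) (eq_sym l k) (negbTE kl) eqxx !sub0r.
  by have := mulr_ge0 c0 (ler0n _ (l == j)); rewrite !mulrN mulr1; lra.
have vneg t : ((z - y) ord0 t < 0)%R -> (t == j) || (t == l).
  apply: contraLR; rewrite negb_or => /andP[tj tl]; rewrite -leNgt vE (negbTE tj) (negbTE tl) !subr0.
  have := mulr_ge0 c0 (ler0n _ (t == i)); have := mulr_ge0 (ltW ep) (ler0n _ (t == k)); lra.
have vpos s : (0 < (z - y) ord0 s)%R -> (s == i) || (s == k).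
  apply: contraLR; rewrite negb_or => /andP[si sk]; rewrite -leNgt vE (negbTE si) (negbTE sk) !sub0r.
  have := mulr_ge0 c0 (ler0n _ (s == j)); have := mulr_ge0 (ltW ep) (ler0n _ (s == l)).
  rewrite !mulrN; lra.
have [ki|ki] := eqVneq k i.
  left; rewrite ki.
  have hzl : (z ord0 l < y ord0 l)%R by move: vl; rewrite subE; lra.
  have [s [hs [e0 [e0p hex]]]] := exch hy hzd hzl.
  have vs : (0 < (z - y) ord0 s)%R by rewrite subE; lra.
  have si : s = i by have := vpos s vs; rewrite ki orbb => /eqP.
  rewrite si in hex vs.
  apply: (XL hy hG fz hN _ vs vl e0p); first by rewrite eq_sym.
  move=> eta /hex; rewrite (dirN R i l) !scalerN opprK; exact.
have hyk : (y ord0 k < z ord0 k)%R by move: vk; rewrite subE; lra.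
have [t [ht [e0 [e0p hex]]]] := exch hzd hy hyk.
have vt : ((z - y) ord0 t < 0)%R by rewrite subE; lra.
have kt : k != t by apply/eqP => kt; move: vk vt; rewrite kt; lra.
have Ht : fder f y k t = p%:E.
  apply: (XL hy hG fz hN kt vk vt e0p) => eta /hex.
  by rewrite addeC [X in _ <= X]addeC.
case/orP: (vneg t vt) => /eqP tE; rewrite tE in Ht.
  by right.
by left.
Qed.

Definition RowE y k := forall l, fder f y k l != p%:E.

Lemma step_inv y i j : domR f y -> Ge y ->
  [/\ domR f (inc_step f p%:E y i j), Ge (inc_step f p%:E y i j),
      fder f (inc_step f p%:E y i j) i j != p%:E &
      forall k l, fder f (inc_step f p%:E y i j) k l = p%:E ->
        fder f y k l = p%:E \/ (k != i /\ fder f y k j = p%:E)].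
Proof.
move=> hy hG; rewrite /inc_step; case: ifP => [/andP[ji /eqP hF]|hn].
  by apply: step => //; rewrite eq_sym.
split=> //; last by move=> k l ->; left.
have [ji|ji] := eqVneq j i.
  rewrite ji (D5 fnoo _ hy); apply/negP => /eqP h.
  have /eqP := h; rewrite eqe eq_sym => /eqP p0; move: pneg; rewrite p0 ltxx //.
by move: hn; rewrite ji /= => /negbT.
Qed.

Lemma row_fold i (g : 'I_n -> 'I_n) (ls : seq 'I_n) y : domR f y -> Ge y ->
  [/\ domR f (foldl (fun z l => inc_step f p%:E z i (g l)) y ls),
      Ge (foldl (fun z l => inc_step f p%:E z i (g l)) y ls),
      (forall k, RowE y k -> RowE (foldl (fun z l => inc_step f p%:E z i (g l)) y ls) k) &
      (forall l, fder f (foldl (fun z l => inc_step f p%:E z i (g l)) y ls) i l = p%:E ->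
         fder f y i l = p%:E /\ l \notin map g ls)].
Proof.
elim: ls y => [|a ls IH] y hy hG /=; first by split=> // l ->.
have [hy1 hG1 hne hback] := step_inv i (g a) hy hG.
have [hy2 hG2 hrow hi] := IH _ hy1 hG1.
split=> //.
  move=> k hk; apply: hrow => l; apply/negP => /eqP h.
  case: (hback _ _ h) => [h2|[_ h2]]; [by move: (hk l); rewrite h2 eqxx|by move: (hk (g a)); rewrite h2 eqxx].
move=> l /hi [h1 hl]; case: (hback _ _ h1) => [h2|[]]; last by rewrite eqxx.
split=> //; rewrite in_cons negb_or hl andbT; apply/negP => /eqP la.
by move: h1 hne; rewrite la => ->; rewrite eqxx.
Qed.

Lemma outer_fold (sigma : {perm 'I_n}) (tau : 'I_n -> {perm 'I_n}) (ks : seq 'I_n) y :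
  domR f y -> Ge y ->
  let F := fun y k => let i := sigma k in
       foldl (fun z l => inc_step f p%:E z i (tau i l)) y (enum 'I_n) in
  [/\ domR f (foldl F y ks), Ge (foldl F y ks) &
      forall r, RowE y r \/ r \in map sigma ks -> RowE (foldl F y ks) r].
Proof.
move=> + + F; elim: ks y => [|a ls IH] y hy hG /=.
  by split=> // r [//|].
have [hy1 hG1 hrow hi] := row_fold (sigma a) (tau (sigma a)) (enum 'I_n) hy hG.
have [hy2 hG2 hr] := IH _ hy1 hG1.
split=> // r hr0; apply: hr.
case: hr0 => [hk|]; first by left; apply: hrow.
rewrite in_cons => /orP[/eqP ->|]; last by right.
left => l; apply/negP => /eqP /hi [_].
have : l \in map (tau (sigma a)) (enum 'I_n).
  by apply/mapP; exists ((tau (sigma a))^-1 l)%g; rewrite ?mem_enum ?permKV.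
by move=> ->.
Qed.
End Main.

Lemma min_noo (R : realType) (a b : \bar R) : a != -oo -> b != -oo -> Order.min a b != -oo.
Proof. by move=> ha hb; rewrite /Order.min; case: ifP. Qed.

Unset Implicit Arguments.
Theorem mainTheorem17 (R : realType) (n : nat) (f : 'rV[R]_n -> \bar R)
  (x : 'rV[R]_n) (sigma : {perm 'I_n}) (tau : 'I_n -> {perm 'I_n}) :
  M_convex f ->
  (exists M : R, forall y, domR f y -> forall i, (`|y ord0 i| <= M)%R) ->
  domR f x ->
  phiR f x < 0 ->
  phiR f x < phiR f (PM_IncSlope f sigma tau x).
Proof.
move=> [[fnoo [_ [m [A [b [c frep]]]]]] exch] [M bnd] hx hphi.
have phi_noo : phiR f x != -oo.
  rewrite /phiR; apply: (big_ind (fun v => v != -oo)) => //; first exact: min_noo.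
  move=> i _; apply: (big_ind (fun v => v != -oo)) => //; first exact: min_noo.
  by move=> j _; apply: (fder_noo fnoo frep).
have hfin : phiR f x \is a fin_num by rewrite fin_numE phi_noo (lt_eqF (lt_trans hphi (ltry 0%R))).
set p := fine (phiR f x).
have hp : phiR f x = p%:E by rewrite /p fineK.
have pneg : (p < 0)%R by rewrite -lte_fin -hp.
have hG : Ge f p x.
  move=> s t; rewrite -hp /phiR; apply: le_trans (bigmin_le _ s _) _; exact: bigmin_le.
rewrite /PM_IncSlope hp.
have [hy3 hG3 hrow] := outer_fold fnoo frep exch bnd pneg sigma tau (enum 'I_n) hx hG.
rewrite /phiR; apply: (big_ind (fun v => p%:E < v)); [exact: ltry|by move=> u v hu hv; rewrite lt_min hu hv|].
move=> i _; apply: (big_ind (fun v => p%:E < v)); [exact: ltry|by move=> u v hu hv; rewrite lt_min hu hv|].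
move=> j _; rewrite lt_neqAle hG3 andbT eq_sym.
apply: (hrow i); right; apply/mapP; exists ((sigma^-1) i)%g; by rewrite ?mem_enum ?permKV.
Qed.
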